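(* Let $n\ge 2$ and let $A$ be an associative (not necessarily unital) algebra over a field which is generalized commutative of degree $n$, i.e. $A$ satisfies the identity $x_1x_2\cdots x_n=x_nx_{n-1}\cdots x_1$. If $n\not\equiv 1 \pmod 4$, then $A$ is eventually commutative of degree $n+1$; otherwise (if $n\equiv 1\pmod 4$), $A$ is eventually commutative of degree $n+2$.
   Context: An algebra $A$ satisfies an identity $x_1\cdots x_m=x_{\tau(1)}\cdots x_{\tau(m)}$ (with $\tau\in S_m$) if $a_1\cdots a_m=a_{\tau(1)}\cdots a_{\tau(m)}$ for all $a_1,\dots,a_m\in A$. $A$ is eventually commutative of degree $k$ if it satisfies $x_1\cdots x_k=x_{\tau(1)}\cdots x_{\tau(k)}$ for every $\tau\in S_k$. *)

(* Defs.v *)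
From mathcomp Require Import all_boot all_order all_algebra all_fingroup.
Set Implicit Arguments. Unset Strict Implicit. Unset Printing Implicit Defensive.
Import GRing.Theory.
Local Open Scope ring_scope.

Definition assoc_algebra (K : fieldType) (A : lmodType K) (mul : A -> A -> A) : Prop :=
  [/\ (forall x y z : A, mul x (mul y z) = mul (mul x y) z),
      (forall (k : K) (x y z : A), mul (k *: x + y) z = k *: mul x z + mul y z)
    & (forall (k : K) (x y z : A), mul z (k *: x + y) = k *: mul z x + mul z y)].

(* Left-nested product x_1 x_2 ... x_m of a nonempty sequence
   (associativity makes the bracketing irrelevant); the empty product is
   never used (all degrees considered are >= 1). *)
Definition seqprod (T : Type) (mul : T -> T -> T) (d : T) (s : seq T) : T :=
  if s is x :: s' then foldl mul x s' else d.

Definition satisfies_identity (K : fieldType) (A : lmodType K) (mul : A -> A -> A)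
  (m : nat) (tau : 'S_m) : Prop :=
  forall a : 'I_m -> A,
    seqprod mul 0 [seq a i | i <- enum 'I_m] = seqprod mul 0 [seq a (tau i) | i <- enum 'I_m].

Definition eventually_commutative (K : fieldType) (A : lmodType K) (mul : A -> A -> A)
  (k : nat) : Prop :=
  forall tau : 'S_k, satisfies_identity mul tau.

Definition generalized_commutative (K : fieldType) (A : lmodType K) (mul : A -> A -> A)
  (n : nat) : Prop :=
  forall a : 'I_n -> A,
    seqprod mul 0 [seq a i | i <- enum 'I_n] = seqprod mul 0 [seq a (rev_ord i) | i <- enum 'I_n].

(* Main.v *)
Require Import Defs.
From mathcomp Require Import all_boot all_order all_algebra all_fingroup zify.

Section Semi.
Variables (T : eqType) (mul : T -> T -> T) (d0 : T).
Hypothesis mulA : forall x y z, mul x (mul y z) = mul (mul x y) z.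

Definition P (s : seq T) := Defs.seqprod mul d0 s.
Arguments P : simpl never.

Lemma foldl_mulA a b s : foldl mul (mul a b) s = mul a (foldl mul b s).
Proof. elim: s b => [|x s IH] b //=. by rewrite -mulA IH. Qed.

Lemma P_cat u w : u != [::] -> w != [::] -> P (u ++ w) = mul (P u) (P w).
Proof.
case: u => [|x u] // _; case: w => [|y w] // _.
by rewrite /P /= foldl_cat /= foldl_mulA.
Qed.

Lemma P_cong c u u' e : u != [::] -> u' != [::] -> P u = P u' ->
  P (c ++ u ++ e) = P (c ++ u' ++ e).
Proof.
move=> nu nu' E.
have H v : v != [::] -> P (v ++ e) = if e is [::] then P v else mul (P v) (P e).
  move=> nv; case: e => [|y e]; first by rewrite cats0.
  by rewrite P_cat.
case: c => [|x c].
  by rewrite !cat0s (H u nu) (H u' nu') E.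
rewrite !catA H ?H //. by rewrite !P_cat // E.
Qed.

Lemma P_flat (bs : seq (seq T)) : bs != [::] -> all (fun b => b != [::]) bs ->
  P (flatten bs) = P (map P bs).
Proof.
elim: bs => [|b bs IH] // _ /andP[nb nall].
case: bs IH nall => [|b' bs] IH nall.
  by rewrite /= cats0.
have nf : flatten (b' :: bs) != [::].
  by move: nall => /andP[]; case: (b').
have -> : flatten [:: b, b' & bs] = b ++ flatten (b' :: bs) by []. rewrite P_cat // IH //.
have -> : map P [:: b, b' & bs] = [:: P b] ++ map P (b' :: bs) by [].
by rewrite P_cat.
Qed.

Lemma flat_single (s : seq T) : flatten (map (fun z => [:: z]) s) = s.
Proof. by elim: s => //= x s ->. Qed.

Definition GC n := forall s, size s = n -> P s = P (rev s).

Lemma GC_blocks n : GC n -> forall bs, size bs = n -> bs != [::] ->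
  all (fun b => b != [::]) bs -> P (flatten bs) = P (flatten (rev bs)).
Proof.
move=> gc bs sz nb na.
rewrite P_flat // gc ?size_map // -map_rev -P_flat //.
  by case: bs nb {sz na} => // b bs _; rewrite rev_cons; case: (rev bs).
by rewrite all_rev.
Qed.

Lemma B_id n : GC n -> forall p x y q, size p + size q + 1 = n ->
  P (p ++ x :: y :: q) = P (rev q ++ x :: y :: rev p).
Proof.
move=> gc p x y q sz.
have := @GC_blocks _ gc (map (fun z => [:: z]) p ++ [:: x; y] :: map (fun z => [:: z]) q).
rewrite flatten_cat /= flat_single flat_single rev_cat rev_cons -!map_rev.
rewrite -cats1 !flatten_cat !flat_single -catA /=.
apply.
- by rewrite size_cat /= !size_map; lia.
- by case: p {sz}.
- by rewrite all_cat /= !all_map; apply/andP; split; apply/allP.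
Qed.

Lemma two_pair n : GC n -> forall x y u w d, size d + 2 = n ->
  P (x :: y :: u :: w :: d) = P (rev d ++ [:: u; w; x; y]).
Proof.
move=> gc x y u w d sz.
have := @GC_blocks _ gc ([:: x; y] :: [:: u; w] :: map (fun z => [:: z]) d).
rewrite !rev_cons -map_rev -!cats1 !flatten_cat /= !flat_single -!catA /=.
apply => //.
- by rewrite /= size_map; lia.
- by rewrite /= all_map; apply/allP.
Qed.

Lemma P_prefrev n : GC n -> forall p z, size p = n -> 0 < n ->
  P (p ++ [:: z]) = P (rev p ++ [:: z]).
Proof.
move=> gc p z sz n0.
have np : p != [::] by case: p sz => // sz; rewrite -sz ltnn in n0.
rewrite P_cat // [in RHS]P_cat //; first by rewrite gc. by rewrite -size_eq0 size_rev size_eq0.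
Qed.

Fixpoint sw (i : nat) (s : seq T) : seq T :=
  match i, s with
  | 0, x :: y :: s' => y :: x :: s'
  | i'.+1, x :: s' => x :: sw i' s'
  | _, _ => s
  end.

Lemma sw_cat c x y e : sw (size c) (c ++ x :: y :: e) = c ++ y :: x :: e.
Proof. by elim: c => //= z c ->. Qed.

Lemma size_sw i s : size (sw i s) = size s.
Proof. by elim: i s => [|i IH] [|x [|y s]] //=; rewrite IH. Qed.

Lemma sw_split i (v : seq T) : i.+1 < size v -> exists c x y e, v = c ++ x :: y :: e /\ size c = i.
Proof.
elim: i v => [|i IH] [|x [|y v]] //= H.
- by exists [::], x, y, v.
- have [c [a [b [e [E <-]]]]] := IH (y :: v) H.
  by exists (x :: c), a, b, e; rewrite E.
Qed.

Lemma sw_catl i u w : i.+1 < size u -> sw i (u ++ w) = sw i u ++ w.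
Proof. move/sw_split => [c [x [y [e [-> <-]]]]]. by rewrite sw_cat -!catA /= sw_cat. Qed.

Definition SWall L := forall c x y e, size c + size e + 2 = L ->
  P (c ++ x :: y :: e) = P (c ++ y :: x :: e).
Definition SE L := forall v i j, size v = L -> i.+1 < L -> j.+1 < L ->
  P (sw i v) = P (sw j v).
Definition DSp L := forall c x y z e, size c + size e + 3 = L ->
  P (c ++ x :: y :: z :: e) = P (c ++ y :: z :: x :: e).

Lemma SE_DS L : SE L -> DSp L.
Proof.
move=> se c x y z e sz.
have E := se (c ++ y :: x :: z :: e) (size c) (size c).+1.
rewrite sw_cat in E.
have E2 : sw (size c).+1 (c ++ y :: x :: z :: e) = c ++ y :: z :: x :: e.
  by have := sw_cat (c ++ [:: y]) x z e; rewrite size_cat addn1 -!catA.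
rewrite -E2; apply: E; rewrite ?size_cat /=; lia.
Qed.

Lemma SE_one L i : SE L -> i.+1 < L -> (forall v, size v = L -> P (sw i v) = P v) -> SWall L.
Proof.
move=> se iL H c x y e sz.
have E := se (c ++ y :: x :: e) (size c) i.
rewrite sw_cat in E.
rewrite E ?H // ?size_cat /=; lia.
Qed.

Lemma T1 L : DSp L -> forall k s c x e, size s = k.*2 ->
  size c + size s + size e + 1 = L -> P (c ++ x :: s ++ e) = P (c ++ s ++ x :: e).
Proof.
move=> ds; elim=> [|k IH] s c x e.
- by case: s.
- case: s => [|y [|z s]] /= sk sz; try lia.
  rewrite (ds c x y z (s ++ e)); last by rewrite size_cat; lia.
  have := IH s (c ++ [:: y; z]) x e _ _.
  rewrite -!catA /=; apply; rewrite ?size_cat /=; lia.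
Qed.

Lemma T2 L : DSp L -> forall k u s c e, size s = k.*2 ->
  size c + size u + size s + size e = L -> P (c ++ u ++ s ++ e) = P (c ++ s ++ u ++ e).
Proof.
move=> ds k; elim=> [|x u IH] s c e sk sz //.
have E1 := IH s (c ++ [:: x]) e sk.
rewrite -!catA /= in E1.
rewrite /= E1; last by rewrite size_cat /=; move: sz => /=; lia.
apply: (@T1 L ds k s c x (u ++ e) sk); rewrite size_cat; move: sz => /=; lia.
Qed.

Lemma R4 L : DSp L -> forall k s c e, size s = 4 * k ->
  size c + size s + size e = L -> P (c ++ s ++ e) = P (c ++ rev s ++ e).
Proof.
move=> ds; elim=> [|k IH] s c e.
- by case: s.
- case: s => [|x [|y [|z [|w s]]]] /= sk sz; try lia.
  have -> : rev [:: x, y, z, w & s] = rev s ++ [:: w; z; y; x].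
    by rewrite -[x :: _]/([:: x; y; z; w] ++ s) rev_cat.
  have A := @T2 L ds (2 * k) [:: x; y; z; w] s c e.
  rewrite /= in A; rewrite A; last (by lia); last by lia.
  rewrite (IH s c ([:: x; y; z; w] ++ e)); last (by rewrite size_cat /=; lia); last by lia.
  rewrite -!catA /=.
  have d1 := ds ((c ++ rev s) ++ [:: x]) w y z e.
  have d2 := ds (c ++ rev s) x w y (z :: e).
  have d3 := ds ((c ++ rev s) ++ [:: w]) z y x e.
  rewrite -!catA /= in d1 d2 d3.
  rewrite -d1 ?d2 ?d3 //; rewrite ?size_cat ?size_rev /=; lia.
Qed.

Lemma Fsw n : GC n -> forall v i, size v = n.+1 -> i.+1 < n.+1 -> P (sw i v) = P (rev v).
Proof.
move=> gc v i sv iv.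
have : i.+1 < size v by rewrite sv.
move/sw_split => [c [x [y [e [Ev <-]]]]]; subst v.
rewrite sw_cat (@B_id n gc c y x e); last by move: sv; rewrite size_cat /=; lia.
by rewrite rev_cat !rev_cons -!cats1 -!catA.
Qed.

Lemma SE_N1 n : GC n -> SE n.+1.
Proof. by move=> gc v i j sv iv jv; rewrite !(@Fsw n gc). Qed.

Lemma level1 n : GC n -> 2 <= n -> n %% 4 != 1 -> SWall n.+1.
Proof.
move=> gc n2 nm.
have se := @SE_N1 n gc. have ds := @SE_DS _ se.
have nk : n = n %/ 4 * 4 + n %% 4 := divn_eq n 4.
set k := n %/ 4 in nk.
have : n %% 4 < 4 := @ltn_pmod n 4 isT.
case E: (n %% 4) => [|[|[|[|r]]]] // _; rewrite E in nm nk.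
- apply: (@SE_one _ 0 se); first lia.
  move=> v sv; rewrite (@Fsw n gc) //; try lia.
  case/lastP: v sv => [|s z] sv; first by [].
  rewrite size_rcons in sv; case: sv => sv.
  rewrite rev_rcons -cats1.
  have R := @R4 n.+1 ds k s [::] [:: z].
  have Tt := @T1 n.+1 ds (2 * k) (rev s) [::] z [::].
  rewrite !cat0s cats0 in R Tt.
  rewrite Tt ?R // ?size_rev /=; lia.
- done.
- apply: (@SE_one _ (k * 4) se); first lia.
  move=> v sv.
  have : (k * 4).+1 < size v by lia.
  move/sw_split => [c [a [b [e [Ev sc]]]]]; subst v.
  rewrite -sc sw_cat.
  have se1 : size e = 1 by move: sv; rewrite size_cat /=; lia.
  case: e se1 sv => [|z [|]] // _ sv.
  have Pp := @P_prefrev n gc (rev c ++ [:: a; b]) z.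
  rewrite rev_cat revK -catA /= in Pp.
  have R := @R4 n.+1 ds k (rev c) [::] [:: a; b; z].
  rewrite !cat0s revK in R.
  have Tt := @T2 n.+1 ds (2 * k) [:: b; a] c [::] [:: z].
  rewrite !cat0s /= in Tt.
  rewrite -Tt -?Pp ?R //; rewrite ?size_cat ?size_rev /=; lia.
- apply: (@SE_one _ (k * 4) se); first lia.
  move=> v sv.
  have : (k * 4).+1 < size v by lia.
  move/sw_split => [c [a [b [e [Ev sc]]]]]; subst v.
  rewrite -sc sw_cat.
  have se1 : size e = 2 by move: sv; rewrite size_cat /=; lia.
  case: e se1 sv => [|e1 [|z [|]]] // _ sv.
  have Pp := @P_prefrev n gc (rev c ++ [:: a; b; e1]) z.
  rewrite rev_cat revK -catA /= in Pp.
  have R := @R4 n.+1 ds k (rev c) [::] [:: a; b; e1; z].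
  rewrite !cat0s revK in R.
  have Tt := @T2 n.+1 ds (2 * k) [:: e1; b; a] c [::] [:: z].
  rewrite !cat0s /= in Tt.
  have D := ds c e1 b a [:: z].
  rewrite -D -?Tt -?Pp ?R //; rewrite ?size_cat ?size_rev /=; lia.
Qed.

Lemma SE_N2 n : GC n -> 2 <= n -> SE n.+2.
Proof.
move=> gc n2.
have Hc u i c e : size u = n.+1 -> i.+1 < n.+1 ->
    P (c ++ sw i u ++ e) = P (c ++ rev u ++ e).
  move=> su iu; apply: P_cong; last exact: (@Fsw n gc).
  - by rewrite -size_eq0 size_sw su.
  - by rewrite -size_eq0 size_rev su.
suff key : forall v i, size v = n.+2 -> i.+1 < n.+2 -> P (sw i v) = P (sw 1 v).
  by move=> v i j sv iv jv; rewrite !key.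
move=> v i sv iv.
case: (ltnP i n) => hi.
- have su : size (take n.+1 v) = n.+1 by rewrite size_take sv ltnSn.
  rewrite -(cat_take_drop n.+1 v) !sw_catl ?su //; try lia.
  set u := take n.+1 v; set w := drop n.+1 v.
  have E1 j : P (sw j u ++ w) = P ([::] ++ sw j u ++ w) by [].
  rewrite E1 (E1 1) (Hc u i) ?(Hc u 1) //; lia.
- have -> : i = n.-1.+1 by lia.
  case: v sv => [|z u] // [] su.
  have E1 : P (z :: sw n.-1 u) = P ([:: z] ++ sw n.-1 u ++ [::]) by rewrite cats0.
  have E2 : P (z :: sw 0 u) = P ([:: z] ++ sw 0 u ++ [::]) by rewrite cats0.
  rewrite /= E1 E2 (Hc u n.-1) ?(Hc u 0) //; lia.
Qed.

Lemma level2 n : GC n -> 2 <= n -> n %% 4 = 1 -> SWall n.+2.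
Proof.
move=> gc n2 nm.
have se := @SE_N2 n gc n2. have ds := @SE_DS _ se.
have nk : n = n %/ 4 * 4 + n %% 4 := divn_eq n 4.
set k := n %/ 4 in nk. rewrite nm in nk.
apply: (@SE_one _ (k * 4) se); first lia.
move=> v sv.
have : (k * 4).+1 < size v by lia.
move/sw_split => [c [a [b [e [Ev sc]]]]]; subst v.
rewrite -sc sw_cat.
have se1 : size e = 1 by move: sv; rewrite size_cat /=; lia.
case: e se1 sv => [|e1 [|]] // _ sv.
have [s [t [Ec st]]] : exists s t, c = s ++ t /\ size t = 4.
  by exists (take (size c - 4) c), (drop (size c - 4) c); rewrite cat_take_drop size_drop; split => //; lia.
subst c.
case: t st sc sv => [|x [|y [|u [|w [|]]]]] // _ sc sv.
rewrite size_cat /= in sc.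
rewrite -!catA /=.
have TP := @two_pair n gc x y u w (s ++ [:: a; b; e1]).
rewrite rev_cat /= in TP.
have A := @T2 n.+2 ds (2 * (k - 1)) [:: x; y; u; w] s [::] [:: a; b; e1].
rewrite /= in A.
have Bt := @T2 n.+2 ds (2 * (k - 1)) [:: e1; b; a] (rev s) [::] [:: u; w; x; y].
rewrite /= in Bt.
have R := @R4 n.+2 ds (k - 1) (rev s) [::] [:: e1; b; a; u; w; x; y].
rewrite /= revK in R.
have Key : P (s ++ [:: x; y; u; w; a; b; e1]) = P (s ++ [:: e1; b; a; u; w; x; y]).
  rewrite -A ?TP ?Bt ?R //; rewrite ?size_cat ?size_rev /=; lia.
have D1 := ds (s ++ [:: e1; b; a]) x u w [:: y].
have D2 := ds (s ++ [:: e1]) x b a [:: u; w; y].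
have D3 := ds (s ++ [:: e1; x; b; a]) y u w [::].
have D4 := ds (s ++ [:: e1; x]) y b a [:: u; w].
have D5 := ds s e1 x y [:: b; a; u; w].
have D6 := ds (s ++ [:: x; y]) e1 b a [:: u; w].
have D7 := ds (s ++ [:: x; y; b; a]) e1 u w [::].
have D8 := ds (s ++ [:: x; y]) u b a [:: w; e1].
have D9 := ds (s ++ [:: x; y; u]) w b a [:: e1].
rewrite -!catA /= in D1 D2 D3 D4 D5 D6 D7 D8 D9.
rewrite Key -D1 -?D2 -?D3 -?D4 ?D5 ?D6 ?D7 -?D8 -?D9 //; rewrite ?size_cat /=; lia.
Qed.

Lemma move_front L : SWall L -> forall t1 c x t2, size (c ++ x :: t1 ++ t2) = L ->
  P (c ++ x :: t1 ++ t2) = P (c ++ t1 ++ x :: t2).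
Proof.
move=> swl; elim=> [|y t1 IH] c x t2 sz //=.
rewrite swl; last by move: sz; rewrite !size_cat /= size_cat; lia.
have := IH (c ++ [:: y]) x t2.
rewrite -!catA /=; apply; move: sz; rewrite !size_cat /=; lia.
Qed.

Lemma SW_perm L : SWall L -> forall s t, size s = L -> perm_eq s t -> P s = P t.
Proof.
move=> swl.
suff H : forall s t c, size (c ++ s) = L -> perm_eq s t -> P (c ++ s) = P (c ++ t).
  by move=> s t ss pe; apply: (H s t [::]).
elim=> [|x s IH] t c sz pe.
  by move: (perm_size pe); case: t pe.
have xt : x \in t by rewrite -(perm_mem pe) mem_head.
case/splitPr: xt pe => t1 t2 pe.
have pe' : perm_eq s (t1 ++ t2).
  rewrite -(perm_cons x); apply: (perm_trans pe).
  by apply/seq.permP => q; rewrite /= !count_cat /=; lia.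
have := IH (t1 ++ t2) (c ++ [:: x]).
rewrite -!catA /= => ->; last by move: sz; rewrite !size_cat.
- apply: (@move_front L swl).
  by move: sz; rewrite !size_cat /= !size_cat (perm_size pe') size_cat.
- done.
Qed.

End Semi.

Theorem theorem3p4 (K : fieldType) (A : lmodType K) (mul : A -> A -> A) (n : nat) :
  (2 <= n)%N -> assoc_algebra mul -> generalized_commutative mul n ->
  (n %% 4 != 1 -> eventually_commutative mul n.+1)%N /\
  (n %% 4 = 1 -> eventually_commutative mul n.+2)%N.
Proof.
move=> n2 [mulA _ _] gcm.
have gc : GC _ mul 0%R n.
  move=> s sz.
  have E1 : map (fun i : 'I_n => nth 0%R s i) (enum 'I_n) = s.
    have -> : map (fun i : 'I_n => nth 0%R s i) (enum 'I_n) = map (nth 0%R s) (map val (enum 'I_n)).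
      by rewrite -map_comp.
    by rewrite val_enum_ord -sz; exact: mkseq_nth.
  have E2 : map (fun i : 'I_n => nth 0%R s (rev_ord i)) (enum 'I_n) = rev s.
    rewrite -[RHS](mkseq_nth 0%R) size_rev sz /mkseq -val_enum_ord -map_comp.
    apply: eq_map => i /=; by rewrite nth_rev ?sz.
  have := gcm (fun i => nth 0%R s i).
  by rewrite E1 E2.
have ec : forall L, SWall _ mul 0%R L -> eventually_commutative mul L.
  move=> L swl tau a.
  apply: (@SW_perm _ _ _ _ swl); first by rewrite size_map size_enum_ord.
  have -> : map (fun i : 'I_L => a (tau i)) (enum 'I_L) = map a (map tau (enum 'I_L)) by elim: (enum 'I_L) => //= ? ? ->.
  apply: perm_map.
  apply: uniq_perm; first exact: enum_uniq.
    by rewrite map_inj_uniq ?enum_uniq //; exact: perm_inj.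
  move=> i; rewrite mem_enum; symmetry; apply/mapP.
  by exists ((tau^-1)%g i); rewrite ?mem_enum // permKV.
split => H.
- exact: ec _ (level1 _ _ _ mulA _ gc n2 H).
- exact: ec _ (level2 _ _ _ mulA _ gc n2 H).
Qed.
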